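(* For all $g,b,n\ge0$ the inverse mapping class monoid $\mathcal{IM}_{g,b,n}$ is an inverse monoid, i.e. for every $a\in\mathcal{IM}_{g,b,n}$ there is a unique $c\in\mathcal{IM}_{g,b,n}$ with $aca=a$ and $cac=c$.
   Context: Let $S_{g,b}$ be a compact orientable surface of genus $g$ with $b$ boundary components, and $Q_n$ a fixed set of $n$ interior points. Consider homeomorphisms $f$ of $S_{g,b}$ (fixing the boundary pointwise) together with a subset $\{i_1,\dots,i_k\}\subseteq Q_n$, $0\le k\le n$, that $f$ maps bijectively onto a subset $\{j_1,\dots,j_k\}\subseteq Q_n$. If $h$ maps $\{s_1,\dots,s_l\}\subseteq Q_n$ bijectively onto $\{t_1,\dots,t_l\}\subseteq Q_n$, the composite $h\circ f$ is equipped with the set of those $i_r$ with $f(i_r)\in\{s_1,\dots,s_l\}$ (possibly empty), which it maps bijectively into $Q_n$. The set of isotopy classes of such maps, with this composition, is a monoid denoted $\mathcal{IM}_{g,b,n}$, the inverse mapping class monoid. For $g=0,b=1$ it is the inverse braid monoid. *)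

(* Defs.v *)
From HB Require Import structures.
From mathcomp Require Import all_boot all_order all_algebra.
From mathcomp Require Import all_classical all_reals all_analysis.
From mathcomp Require Import Rstruct Rstruct_topology.
From Stdlib Require Import Rdefinitions.
Notation R := Rdefinitions.R.

Set Implicit Arguments.
Unset Strict Implicit.
Unset Printing Implicit Defensive.

Local Open Scope classical_set_scope.
Local Open Scope ring_scope.

Definition is_homeo {X : topologicalType} (f : X -> X) : Prop :=
  continuous f /\ exists g : X -> X, [/\ continuous g, cancel f g & cancel g f].

(* Raw data of an element of IM: a map together with the subset D of the
   marked points (indexed by 'I_n via Q) that it carries into Q. *)
Definition IMdata (X : Type) (n : nat) : Type := ((X -> X) * {set 'I_n})%type.

Definition IMrep {X : topologicalType} (B : set X) (n : nat) (Q : 'I_n -> X)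
    (a : IMdata X n) : Prop :=
  [/\ is_homeo a.1,
      (forall x, B x -> a.1 x = x) &
      (forall i, i \in a.2 -> exists j, a.1 (Q i) = Q j)].

Definition IMcomp {X : Type} (n : nat) (Q : 'I_n -> X) (h f : IMdata X n)
    : IMdata X n :=
  (h.1 \o f.1,
   [set i in f.2 | `[< exists2 j, j \in h.2 & f.1 (Q i) = Q j >]]).

Definition IMisotopic {X : topologicalType} (B : set X) (n : nat)
    (Q : 'I_n -> X) (a a' : IMdata X n) : Prop :=
  a.2 = a'.2 /\
  exists H : R -> X -> X,
    [/\ {within [set p : R * X | (0 <= p.1 <= 1)%R],
           continuous (fun p : R * X => H p.1 p.2)},
        H 0%R = a.1, H 1%R = a'.1 &
        forall t : R, (0 <= t <= 1)%R ->
          [/\ is_homeo (H t),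
              (forall x, B x -> H t x = x) &
              (forall i, i \in a.2 -> H t (Q i) = a.1 (Q i))]].

(* Main.v *)
Require Import Defs.
From HB Require Import structures.
From mathcomp Require Import all_boot all_order all_algebra.
From mathcomp Require Import all_classical all_reals all_analysis.
From mathcomp Require Import Rstruct Rstruct_topology.
From Stdlib Require RIneq.

Local Open Scope classical_set_scope.
Import GRing.Theory Num.Theory Order.TTheory.
Lemma cont_snd_comp (X : topologicalType) (f : X -> X) (A : set (R * X)) :
  continuous f -> {within A, continuous (fun p : R * X => f p.2)}.
Proof.
move=> fc; apply: continuous_subspaceT => p.
apply: (continuous_comp (f := snd) (g := f)); last exact: fc.
exact: cvg_snd.
Qed.

Lemma cont_conj (X : topologicalType) (g : X -> X) (H : R -> X -> X)
  (A : set (R * X)) (hA : forall p y, A p -> A (p.1, y)) :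
  continuous g ->
  {within A,
     continuous (fun p : R * X => H p.1 p.2)} ->
  {within A,
     continuous (fun p : R * X => g (H p.1 (g p.2)))}.
Proof.
move=> gc /subspace_continuousP Hc; apply/subspace_continuousP => x Ax.
pose phi := fun p : R * X => (p.1, g p.2).
have phiA : forall p, A p -> A (phi p) by move=> p Ap; exact: hA.
have phic : phi @ within A (nbhs x) --> within A (nbhs (phi x)).
  move=> W /= WN.
  have phi0 : phi @ nbhs x --> phi x.
    have h1 : fst @ nbhs x --> nbhs x.1 by exact: cvg_fst.
    have h2 : (fun p : R * X => g p.2) @ nbhs x --> nbhs (g x.2).
      apply: (continuous_comp (f := snd) (g := g)); last exact: gc.
      exact: cvg_snd.
    exact: (cvg_pair h1 h2).
  have := phi0 _ WN.
  move=> H0; rewrite /within /=; exact: (@filterS _ (nbhs x) _ _ _ (fun p Hp Ap => Hp (phiA _ Ap)) H0).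
have := Hc (phi x) (phiA _ Ax).
move=> Hc'.
have HH := cvg_comp phi (fun p : R * X => H p.1 p.2) phic Hc'.
exact: (cvg_comp _ g HH (gc _)).
Qed.

Lemma iso_const (X : topologicalType) (B : set X) (n : nat) (Q : 'I_n -> X)
  (a a' : IMdata X n) :
  IMrep B Q a' -> a.2 = a'.2 -> a.1 = a'.1 -> IMisotopic B Q a a'.
Proof.
move=> [[hc hg] hB hD] e2 e1; split => //.
exists (fun _ => a'.1); split => //.
- exact: cont_snd_comp.
- by move=> t _; split => // i _; rewrite e1.
Qed.

Theorem mainTheorem5 (X : topologicalType) (B : set X) (n : nat)
    (Q : 'I_n -> X) :
  compact [set: X] -> hausdorff_space X ->
  injective Q -> (forall i, ~ B (Q i)) ->
  forall a : IMdata X n, IMrep B Q a ->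
  exists c : IMdata X n,
    [/\ IMrep B Q c,
        IMisotopic B Q (IMcomp Q a (IMcomp Q c a)) a,
        IMisotopic B Q (IMcomp Q c (IMcomp Q a c)) c &
        forall c' : IMdata X n, IMrep B Q c' ->
          IMisotopic B Q (IMcomp Q a (IMcomp Q c' a)) a ->
          IMisotopic B Q (IMcomp Q c' (IMcomp Q a c')) c' ->
          IMisotopic B Q c' c].
Proof.
move=> _ _ Qinj _ [f D] aR; have := aR => -[[fc [g [gc fK gK]]] fB fD] /=.
rewrite /= in fc fK gK fB fD.
have gB : forall x, B x -> g x = x.
  by move=> x Bx; rewrite -{1}(fB x Bx) fK.
pose D' := finset (fun j : 'I_n => `[< exists2 i, i \in D & f (Q i) = Q j >]).
have D'P : forall j, j \in D' <-> exists2 i, i \in D & f (Q i) = Q j.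
  by move=> j; rewrite inE; split => /asboolP.
have cRep : IMrep B Q (g, D').
  split => //=; first by split => //; exists f.
  move=> j /D'P [i iD <-]; exists i; exact: fK.
clearbody D'.
exists (g, D'); split => //.
- apply: iso_const => //=; idtac.
  + apply/setP => i; rewrite !inE; apply/idP/idP.
      by move=> /andP [/andP [] ].
    move=> iD; have [j fj] := fD i iD.
    apply/andP; split; last by apply/asboolP; exists i => //=; rewrite fK.
    apply/andP; split => //; apply/asboolP; exists j => //.
    by apply/D'P; exists i.
  + by apply/funext => x /=; rewrite fK.
- apply: iso_const => //=.
  + apply/setP => j; rewrite !inE; apply/idP/idP.
      by move=> /andP [/andP [] ].
    move=> /[dup] jD' /D'P [i iD fij].
    apply/andP; split; last by apply/asboolP; exists j => //=; rewrite gK.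
    apply/andP; split => //; apply/asboolP; exists i => //.
    by rewrite -fij fK.
  + by apply/funext => x /=; rewrite gK.
- move=> [c E] [[cc [ci [cic cK ciK]]] cB cE] /= [e2 [H [Hc H0 H1 Ht]]]
    [e3 _].
  simpl in *.
  have cfQ : forall i, i \in D -> c (f (Q i)) = Q i.
    move=> i iD.
    have [|_ _ /(_ i)] := Ht (Rdefinitions.IZR (BinNums.Zpos BinNums.xH)).
      by split; [exact: RIneq.Rle_0_1|exact: RIneq.Rle_refl].
    rewrite e2 iD => /(_ isT) hq.
    have e := etrans (esym (congr1 (fun h => h (Q i)) H1)) hq.
    by apply: esym; apply: (can_inj fK); exact: e.
  have ED : E = D'.
    apply/setP => j; apply/idP/idP.
    - move=> jE.
      have : j \in [set j in [set j in E | `[< exists2 k, k \in D & c (Q j) = Q k >]]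
        | `[< exists2 k, k \in E & f (c (Q j)) = Q k >]] by rewrite e3.
      rewrite !inE => /andP [/andP [_ /asboolP [k kD ck]] _].
      apply/D'P; exists k => //.
      apply: (can_inj cK); rewrite ck; exact: cfQ.
    - move=> /D'P [i iD fij].
      have : i \in D by [].
      rewrite -{1}e2 !inE => /andP [/andP [_ /asboolP [j' j'E fij']] _].
      by rewrite (Qinj _ _ (etrans (esym fij) fij')).
  split => //=.
  exists (fun t x => g (H t (g x))); split.
  - apply: (@cont_conj X g H _ _ gc Hc); by move=> p y.
  - apply/funext => x /=; have -> /= := congr1 (fun h => h (g x)) H0.
    by rewrite gK fK.
  - apply/funext => x /=; have -> /= := congr1 (fun h => h (g x)) H1.
    by rewrite fK.
  - move=> t t01; have [[Hct [Hi [Hic HK HiK]]] HB HQ] := Ht t t01; split.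
    + split.
      * by move=> x; apply: continuous_comp; [apply: continuous_comp; [exact: gc|exact: Hct]|exact: gc].
      * exists (fun x => f (Hi (f x))); split.
        - by move=> x; apply: continuous_comp; [apply: continuous_comp; [exact: fc|exact: Hic]|exact: fc].
        - by move=> x; rewrite gK HK gK.
        - by move=> x; rewrite fK HiK fK.
    + by move=> x Bx; rewrite gB // HB // gB.
    + move=> j; rewrite ED => /D'P [i iD <-].
      by rewrite fK HQ ?e2 //= fK.
Qed.
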